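(* The algorithm Balance2 is not competitive for the infinite server problem on the real line.
   Context: Infinite server problem on the real line: an unbounded number of servers initially reside at a source point; a finite sequence of requests is revealed one by one; each must be served immediately, without knowledge of future requests, by moving a server to it; the cost is the total distance traveled. Balance2 serves a request $r$ by moving to $r$ a server $x$ minimizing $D_x+2d(x,r)$, where $D_x$ is the cumulative distance traveled by $x$ so far and $d(x,r)$ is its distance to $r$ (servers still at the source have $D_x=0$). An online algorithm is competitive if there are $\rho,c$ with $ALG(\sigma)\le\rho\,OPT(\sigma)+c$ for all request sequences $\sigma$. *)

(* Defs.v *)
From Stdlib Require Import Reals List Arith.
Import ListNotations.
Open Scope R_scope.

(* Infinitely many servers, indexed by nat.  A configuration records for each
   server its current position and the cumulative distance D_x it has
   travelled so far. *)
Definition config := nat -> (R * R).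

Definition init_config (s : R) : config := fun _ => (s, 0).

Definition pos (c : config) (i : nat) : R := fst (c i).
Definition dist_travelled (c : config) (i : nat) : R := snd (c i).

Definition bal2_value (c : config) (i : nat) (r : R) : R :=
  dist_travelled c i + 2 * Rabs (pos c i - r).

Definition move (c : config) (i : nat) (r : R) : config :=
  fun j => if Nat.eqb j i
           then (r, dist_travelled c i + Rabs (pos c i - r))
           else c j.

(* At each step the
   server moved is any minimiser of D_x + 2 d(x,r) (arbitrary tie-breaking,
   hence a relation). *)
Inductive bal2_run : config -> list R -> R -> Prop :=
| bal2_nil (c : config) : bal2_run c [] 0
| bal2_cons (c : config) (r : R) (rs : list R) (i : nat) (cost : R) :
    (forall j, bal2_value c i r <= bal2_value c j r) ->
    bal2_run (move c i r) rs cost ->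
    bal2_run c (r :: rs) (Rabs (pos c i - r) + cost).

(* Offline solutions: a schedule assigns to each request the (index of the)
   server that serves it; [p] gives current server positions. *)
Fixpoint sched_cost (p : nat -> R) (sigma : list R) (S : list nat) : R :=
  match sigma, S with
  | r :: rs, i :: is =>
      Rabs (p i - r) + sched_cost (fun j => if Nat.eqb j i then r else p j) rs is
  | _, _ => 0
  end.

Definition valid_schedule (sigma : list R) (S : list nat) : Prop :=
  length S = length sigma.

Definition is_OPT (s : R) (sigma : list R) (v : R) : Prop :=
  (exists S, valid_schedule sigma S /\ sched_cost (fun _ => s) sigma S = v) /\
  (forall S, valid_schedule sigma S -> v <= sched_cost (fun _ => s) sigma S).

(* Main.v *)
Require Import Defs.
From Stdlib Require Import Reals List Lra Lia Arith FunctionalExtensionality Psatz.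
Import ListNotations.
Open Scope R_scope.

Lemma sched_cost_map : forall sigma S p (f : nat -> nat),
  (forall a b, f a = f b -> a = b) ->
  sched_cost p sigma (map f S) = sched_cost (fun j => p (f j)) sigma S.
Proof.
  induction sigma as [|r rs IH]; intros S p f Hf; destruct S as [|i is]; simpl; auto.
  rewrite IH by exact Hf. f_equal.
  f_equal. apply functional_extensionality. intro j.
  destruct (Nat.eqb (f j) (f i)) eqn:E1; destruct (Nat.eqb j i) eqn:E2; auto.
  - apply Nat.eqb_eq in E1. apply Hf in E1. apply Nat.eqb_neq in E2. contradiction.
  - apply Nat.eqb_eq in E2. subst. rewrite Nat.eqb_refl in E1. discriminate.
Qed.

Lemma fin_min (G : nat -> list nat -> R) (ok : list nat -> Prop) : forall m,
  (forall i, (i <= m)%nat -> exists T, ok T /\ forall T', ok T' -> G i T <= G i T') ->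
  exists i0 T0, (i0 <= m)%nat /\ ok T0 /\ forall i T, (i <= m)%nat -> ok T -> G i0 T0 <= G i T.
Proof.
  induction m as [|m IH]; intros H.
  - destruct (H 0%nat (le_n 0)) as [T [HS HS']].
    exists 0%nat, T. split; [lia|split; auto].
    intros i T' Hi HS2. assert (i = 0%nat) by lia. subst. auto.
  - destruct IH as [i0 [T0 [Hi0 [HS0 HS0']]]].
    { intros i Hi. apply H. lia. }
    destruct (H (S m) (le_n _)) as [T1 [HS1 HS1']].
    destruct (Rle_or_lt (G i0 T0) (G (S m) T1)) as [Hle|Hlt].
    + exists i0, T0. split; [lia|split; auto].
      intros i T Hi HS. destruct (Nat.eq_dec i (S m)) as [->|Hne].
      * eapply Rle_trans; [exact Hle|]. auto.
      * apply HS0'; auto. lia.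
    + exists (S m), T1. split; [lia|split; auto].
      intros i T Hi HS. destruct (Nat.eq_dec i (S m)) as [->|Hne].
      * auto.
      * eapply Rle_trans; [left; exact Hlt|]. apply HS0'; auto. lia.
Qed.

Definition swap (m i j : nat) : nat :=
  if Nat.eqb j m then i else if Nat.eqb j i then m else j.

Lemma swap_inj : forall m i a b, swap m i a = swap m i b -> a = b.
Proof.
  intros m i a b. unfold swap.
  destruct (Nat.eqb a m) eqn:E1; destruct (Nat.eqb b m) eqn:E2;
  destruct (Nat.eqb a i) eqn:E3; destruct (Nat.eqb b i) eqn:E4;
  repeat match goal with H : Nat.eqb _ _ = true |- _ => apply Nat.eqb_eq in H
       | H : Nat.eqb _ _ = false |- _ => apply Nat.eqb_neq in H end; lia.
Qed.

Lemma min_exists (s : R) : forall sigma p m, (forall j, (m <= j)%nat -> p j = s) ->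
  exists S0, length S0 = length sigma /\
    forall S, length S = length sigma -> sched_cost p sigma S0 <= sched_cost p sigma S.
Proof.
  induction sigma as [|r rs IH]; intros p m Hp.
  - exists []. split; auto. intros L HS. destruct L; simpl in *; try discriminate. lra.
  - set (G := fun i L => Rabs (p i - r) + sched_cost (fun j => if Nat.eqb j i then r else p j) rs L).
    destruct (fin_min G (fun L => length L = length rs) m) as [i0 [S0 [Hi0 [HS0 HS0']]]].
    { intros i Hi. destruct (IH (fun j => if Nat.eqb j i then r else p j) (S m)) as [T [HS HS']].
      { intros j Hj. destruct (Nat.eqb j i) eqn:E. apply Nat.eqb_eq in E. lia. apply Hp. lia. }
      exists T. split; auto. intros S' HS2. unfold G. specialize (HS' S' HS2). lra. }
    exists (i0 :: S0). split; [simpl; auto|].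
    intros [|i is] Hl; simpl in Hl; try discriminate. injection Hl as Hl.
    change (G i0 S0 <= G i is).
    destruct (le_lt_dec i m) as [Hi|Hi].
    + apply HS0'; auto.
    + assert (Hpi : p i = s) by (apply Hp; lia).
      assert (Hpm : p m = s) by (apply Hp; lia).
      assert (E : G i is = G m (map (swap m i) is)).
      { unfold G. rewrite sched_cost_map by apply swap_inj. rewrite Hpi, Hpm. f_equal.
        f_equal. apply functional_extensionality. intro j. unfold swap.
        destruct (Nat.eqb j m) eqn:E1.
        - apply Nat.eqb_eq in E1. subst j. 
          assert (Nat.eqb m i = false) by (apply Nat.eqb_neq; lia).
          rewrite H. assert (Nat.eqb i m = false) by (apply Nat.eqb_neq; lia). rewrite H0. congruence.
        - destruct (Nat.eqb j i) eqn:E2.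
          + rewrite Nat.eqb_refl. auto.
          + rewrite E1. auto. }
      rewrite E. apply HS0'; auto. rewrite length_map. auto.
Qed.

Lemma is_OPT_exists : forall s sigma, exists v, is_OPT s sigma v.
Proof.
  intros s sigma. destruct (min_exists s sigma (fun _ => s) 0%nat) as [S0 [H1 H2]]; auto.
  exists (sched_cost (fun _ => s) sigma S0). split.
  - exists S0. split; auto.
  - intros S HS. apply H2. exact HS.
Qed.

Lemma sched_cost_nonneg : forall sigma S p, 0 <= sched_cost p sigma S.
Proof.
  induction sigma as [|r rs IH]; intros S p; destruct S; simpl; try lra.
  pose proof (Rabs_pos (p n - r)). pose proof (IH S (fun j => if Nat.eqb j n then r else p j)). lra.
Qed.
Section B.
Variable s : R.

Definition fresh (c : config) j := c j = (s, 0).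
Definition dead (h : R) (c : config) j :=
  fst (c j) - s > h /\ snd (c j) + 2 * (fst (c j) - s) > 4 * h.
Definition Fin (c : config) := exists M, forall j, (M <= j)%nat -> fresh c j.
Definition StartInv (c : config) h := (forall j, fresh c j \/ dead h c j) /\ Fin c.
Definition Others (c : config) L h := forall j, j <> L -> fresh c j \/ dead h c j.
Definition Q (LB : R) (c : config) (sigma : list R) :=
  (exists cost, bal2_run c sigma cost) /\ (forall cost, bal2_run c sigma cost -> LB <= cost).

Lemma val_fresh : forall c j x, fresh c j -> 0 <= x -> bal2_value c j (s + x) = 2 * x.
Proof.
  intros c j x H Hx. unfold bal2_value, dist_travelled, Defs.pos. rewrite H. cbn [fst snd].
  replace (s - (s + x)) with (- x) by ring. rewrite Rabs_Ropp, Rabs_right by lra. ring.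
Qed.

Lemma val_dead : forall h c j x, dead h c j -> x <= h -> bal2_value c j (s + x) > 2 * x.
Proof.
  intros h c j x [H1 H2] Hx. unfold bal2_value, dist_travelled, Defs.pos.
  rewrite Rabs_right by lra. lra.
Qed.

Lemma dead_mono : forall h h' c j, h' <= h -> dead h c j -> dead h' c j.
Proof. intros h h' c j Hh [H1 H2]. split; lra. Qed.

Lemma StartInv_mono : forall c h h', h' <= h -> StartInv c h -> StartInv c h'.
Proof.
  intros c h h' Hh [H1 H2]. split; auto. intro j. destruct (H1 j); auto.
  right. eapply dead_mono; eauto.
Qed.

Lemma move_eq : forall c i r, move c i r i = (r, dist_travelled c i + Rabs (Defs.pos c i - r)).
Proof. intros. unfold move. rewrite Nat.eqb_refl. auto. Qed.

Lemma move_neq : forall c i r j, j <> i -> move c i r j = c j.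
Proof. intros. unfold move. apply Nat.eqb_neq in H. rewrite H. auto. Qed.

Lemma Fin_move : forall c i r, Fin c -> Fin (move c i r).
Proof.
  intros c i r [M HM]. exists (Nat.max M (S i)). intros j Hj.
  unfold fresh. rewrite move_neq by lia. apply HM. lia.
Qed.

Lemma forced_live : forall c L pL DL h x,
  c L = (pL, DL) -> Others c L h -> 0 <= x -> x <= h ->
  DL + 2 * Rabs (pL - (s + x)) < 2 * x ->
  (forall j, bal2_value c L (s + x) <= bal2_value c j (s + x)) /\
  (forall i, (forall j, bal2_value c i (s + x) <= bal2_value c j (s + x)) -> i = L).
Proof.
  intros c L pL DL h x HL HO Hx Hxh Hv.
  assert (HvL : bal2_value c L (s + x) < 2 * x).
  { unfold bal2_value, dist_travelled, Defs.pos. rewrite HL. cbn [fst snd]. exact Hv. }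
  split.
  - intro j. destruct (Nat.eq_dec j L) as [->|Hne]; [lra|].
    destruct (HO j Hne) as [Hf|Hd].
    + rewrite (val_fresh _ _ _ Hf Hx). lra.
    + pose proof (val_dead _ _ _ _ Hd Hxh). lra.
  - intros i Hi. destruct (Nat.eq_dec i L) as [->|Hne]; auto.
    specialize (Hi L). destruct (HO i Hne) as [Hf|Hd].
    + rewrite (val_fresh _ _ _ Hf Hx) in Hi. lra.
    + pose proof (val_dead _ _ _ _ Hd Hxh). lra.
Qed.

Lemma forced_fresh : forall c h x, StartInv c h -> 0 <= x -> x <= h ->
  (exists i, forall j, bal2_value c i (s + x) <= bal2_value c j (s + x)) /\
  (forall i, (forall j, bal2_value c i (s + x) <= bal2_value c j (s + x)) -> fresh c i).
Proof.
  intros c h x [HA [M HM]] Hx Hxh.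
  assert (HF : fresh c M) by (apply HM; lia).
  split.
  - exists M. intro j. rewrite (val_fresh _ _ _ HF Hx).
    destruct (HA j) as [Hf|Hd].
    + rewrite (val_fresh _ _ _ Hf Hx). lra.
    + pose proof (val_dead _ _ _ _ Hd Hxh). lra.
  - intros i Hi. destruct (HA i) as [Hf|Hd]; auto.
    specialize (Hi M). rewrite (val_fresh _ _ _ HF Hx) in Hi.
    pose proof (val_dead _ _ _ _ Hd Hxh). lra.
Qed.

Lemma run_inv : forall c r rs cost, bal2_run c (r :: rs) cost ->
  exists i cost', (forall j, bal2_value c i r <= bal2_value c j r) /\
    bal2_run (move c i r) rs cost' /\ cost = Rabs (Defs.pos c i - r) + cost'.
Proof. intros c r rs cost H. inversion H; subst. exists i, cost0. auto. Qed.

Lemma Q_weaken : forall LB LB' c sigma, LB' <= LB -> Q LB c sigma -> Q LB' c sigma.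
Proof. intros LB LB' c sigma H [H1 H2]. split; auto. intros cost Hc. specialize (H2 cost Hc). lra. Qed.

Fixpoint rounds (b : R) (n : nat) : list R :=
  match n with
  | O => []
  | S n => (s + (b + 1)) :: (s + b) :: rounds b n
  end.

Lemma rounds_ok : forall n c L D b rest LB,
  0 <= b -> c L = (s + b, D) -> Others c L (b + 1) -> Fin c ->
  D + 2 * INR n + 1 < 2 * b ->
  (forall c', c' L = (s + b, D + 2 * INR n) -> Others c' L (b + 1) -> Fin c' -> Q LB c' rest) ->
  Q LB c (rounds b n ++ rest).
Proof.
  induction n as [|n IH]; intros c L D b rest LB Hb HL HO HF Hcond Hk.
  - simpl. apply Hk; auto. rewrite HL. f_equal. simpl. ring.
  - rewrite S_INR in Hcond. simpl.
    assert (Hn : 0 <= INR n) by apply pos_INR.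
    assert (Ha : D + 2 * Rabs (s + b - (s + (b + 1))) < 2 * (b + 1)).
    { replace (s + b - (s + (b + 1))) with (-(1)) by ring. rewrite Rabs_Ropp, Rabs_R1. lra. }
    destruct (forced_live c L (s + b) D (b + 1) (b + 1) HL HO ltac:(lra) ltac:(lra) Ha) as [Hmin1 Hforce1].
    set (c1 := move c L (s + (b + 1))).
    assert (HL1 : c1 L = (s + (b + 1), D + 1)).
    { unfold c1. rewrite move_eq. unfold dist_travelled, Defs.pos. rewrite HL. cbn [fst snd]. f_equal.
      replace (s + b - (s + (b + 1))) with (-(1)) by ring. rewrite Rabs_Ropp, Rabs_R1. auto. }
    assert (HO1 : Others c1 L (b + 1)).
    { intros j Hj. unfold Others, fresh, dead in *. unfold c1. rewrite move_neq by auto. apply HO; auto. }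
    assert (HF1 : Fin c1) by (apply Fin_move; auto).
    assert (Hb2 : D + 1 + 2 * Rabs (s + (b + 1) - (s + b)) < 2 * b).
    { replace (s + (b + 1) - (s + b)) with 1 by ring. rewrite Rabs_R1. lra. }
    destruct (forced_live c1 L (s + (b + 1)) (D + 1) (b + 1) b HL1 HO1 ltac:(lra) ltac:(lra) Hb2) as [Hmin2 Hforce2].
    set (c2 := move c1 L (s + b)).
    assert (HL2 : c2 L = (s + b, D + 2)).
    { unfold c2. rewrite move_eq. unfold dist_travelled, Defs.pos. rewrite HL1. cbn [fst snd]. f_equal.
      replace (s + (b + 1) - (s + b)) with 1 by ring. rewrite Rabs_R1. ring. }
    assert (HO2 : Others c2 L (b + 1)).
    { intros j Hj. unfold Others, fresh, dead in *. unfold c2. rewrite move_neq by auto. apply HO1; auto. }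
    assert (HF2 : Fin c2) by (apply Fin_move; auto).
    assert (IHQ : Q LB c2 (rounds b n ++ rest)).
    { apply (IH c2 L (D + 2) b rest LB Hb HL2 HO2 HF2); [lra|].
      intros c' H1 H2 H3. apply Hk; auto. rewrite H1, S_INR. f_equal. ring. }
    destruct IHQ as [[cost Hrun] Hlb]. split.
    + exists (Rabs (Defs.pos c L - (s + (b + 1))) + (Rabs (Defs.pos c1 L - (s + b)) + cost)).
      apply bal2_cons; auto. apply bal2_cons; auto.
    + intros cost0 Hrun0.
      destruct (run_inv _ _ _ _ Hrun0) as [i [cost1 [Hm1 [Hr1 ->]]]].
      apply Hforce1 in Hm1. subst i. fold c1 in Hr1.
      destruct (run_inv _ _ _ _ Hr1) as [i [cost2 [Hm2 [Hr2 ->]]]].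
      apply Hforce2 in Hm2. subst i. fold c2 in Hr2.
      specialize (Hlb _ Hr2).
      pose proof (Rabs_pos (Defs.pos c L - (s + (b + 1)))).
      pose proof (Rabs_pos (Defs.pos c1 L - (s + b))). lra.
Qed.


Definition phase (k : nat) : list R :=
  (s + 2 * INR (S k)) :: rounds (2 * INR (S k)) k.

Lemma phase_ok : forall k c rest LB,
  StartInv c (2 * INR (S k) + 1) ->
  (forall c', StartInv c' (2 * INR (S k) - 1) -> Q LB c' rest) ->
  Q (LB + 2 * INR (S k)) c (phase k ++ rest).
Proof.
  intros k c rest LB HS Hk.
  set (b := 2 * INR (S k)) in *.
  assert (Hbk : b = 2 * INR k + 2) by (unfold b; rewrite S_INR; ring).
  assert (Hk0 : 0 <= INR k) by apply pos_INR.
  destruct (forced_fresh c (b + 1) b HS ltac:(lra) ltac:(lra)) as [[i0 Hi0] Hforce].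
  assert (Hmv : forall i, fresh c i -> move c i (s + b) i = (s + b, b)).
  { intros i Hf. rewrite move_eq. unfold dist_travelled, Defs.pos. rewrite Hf. cbn [fst snd].
    f_equal. replace (s - (s + b)) with (- b) by ring. rewrite Rabs_Ropp, Rabs_right by lra. ring. }
  assert (Hrounds : forall i, fresh c i -> Q LB (move c i (s + b)) (rounds b k ++ rest)).
  { intros i Hf. apply (rounds_ok k (move c i (s + b)) i b b rest LB); auto; try lra.
    - intros j Hj. unfold fresh, dead. rewrite move_neq by auto. apply (proj1 HS).
    - apply Fin_move. apply (proj2 HS).
    - intros c' H1 H2 H3. apply Hk. split; auto.
      intro j. destruct (Nat.eq_dec j i) as [->|Hne].
      + right. unfold dead. rewrite H1. cbn [fst snd]. split; lra.
      + destruct (H2 j Hne) as [Hf'|Hd]; [left; exact Hf'|right; eapply dead_mono; [|exact Hd]; lra]. }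
  unfold phase. fold b. simpl app. split.
  - destruct (Hrounds i0 (Hforce i0 Hi0)) as [[cost Hr] _].
    exists (Rabs (Defs.pos c i0 - (s + b)) + cost). apply bal2_cons; auto.
  - intros cost Hr. destruct (run_inv _ _ _ _ Hr) as [i [cost1 [Hm [Hr1 ->]]]].
    pose proof (Hforce i Hm) as Hf.
    destruct (Hrounds i Hf) as [_ Hlb]. specialize (Hlb _ Hr1).
    unfold Defs.pos. rewrite Hf. cbn [fst snd].
    replace (s - (s + b)) with (- b) by ring. rewrite Rabs_Ropp, Rabs_right by lra. lra.
Qed.

Fixpoint phases (m i : nat) : list R :=
  match m with
  | O => []
  | S m' => phase (m' + i) ++ phases m' i
  end.

Lemma phases_ok : forall i m c, StartInv c (2 * INR (m + i) + 1) ->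
  Q (INR m * (2 * INR i)) c (phases m i).
Proof.
  intros i. induction m as [|m IH]; intros c HS.
  - simpl. split.
    + exists 0. constructor.
    + intros cost Hr. inversion Hr. lra.
  - simpl phases. apply (Q_weaken (INR m * (2 * INR i) + 2 * INR (S (m + i)))).
    + rewrite S_INR, S_INR, plus_INR. pose proof (pos_INR m). pose proof (pos_INR i). nra.
    + apply phase_ok.
      * replace (S (m + i)) with (S m + i)%nat by lia. exact HS.
      * intros c' Hc'. apply IH. eapply StartInv_mono; [|exact Hc']. rewrite S_INR. lra.
Qed.

Fixpoint rsched (n : nat) : list nat :=
  match n with O => [] | S n => 1%nat :: 0%nat :: rsched n end.

Fixpoint phsched (m i : nat) : list nat :=
  match m with
  | O => []
  | S m' => (0%nat :: rsched (m' + i)) ++ phsched m' i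
  end.

Lemma len_rounds : forall b n, length (rounds b n) = length (rsched n).
Proof. induction n; simpl; auto. Qed.

Lemma len_phases : forall m i, length (phsched m i) = length (phases m i).
Proof.
  induction m; intros i; simpl; auto. rewrite !length_app. simpl. rewrite len_rounds, IHm. auto.
Qed.

Lemma rounds_cost : forall b n p rest S', p 0%nat = s + b -> p 1%nat = s + (b + 1) ->
  exists q, q 0%nat = s + b /\ q 1%nat = s + (b + 1) /\
    sched_cost p (rounds b n ++ rest) (rsched n ++ S') = sched_cost q rest S'.
Proof.
  intros b. induction n as [|n IH]; intros p rest S' H0 H1.
  - exists p. simpl. auto.
  - simpl. rewrite H1.
    set (p1 := fun j => if Nat.eqb j 1 then s + (b + 1) else p j).
    destruct (IH (fun j => if Nat.eqb j 0 then s + b else p1 j) rest S') as [q [Hq0 [Hq1 Hq]]];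
      [simpl; auto|simpl; unfold p1; simpl; auto|].
    exists q. split; auto. split; auto. rewrite <- Hq.
    rewrite H0. unfold p1.
    replace (s + (b + 1) - (s + (b + 1))) with 0 by ring.
    replace (s + b - (s + b)) with 0 by ring. rewrite Rabs_R0. ring.
Qed.

Lemma phase_cost : forall k p rest S', (1 <= k)%nat ->
  exists q, q 0%nat = s + 2 * INR (S k) /\ q 1%nat = s + (2 * INR (S k) + 1) /\
    sched_cost p (phase k ++ rest) ((0%nat :: rsched k) ++ S') =
    Rabs (p 0%nat - (s + 2 * INR (S k))) + Rabs (p 1%nat - (s + (2 * INR (S k) + 1))) + sched_cost q rest S'.
Proof.
  intros k p rest S' Hk. destruct k as [|n]; [lia|].
  unfold phase. set (b := 2 * INR (S (S n))). simpl.
  set (p1 := fun j => if Nat.eqb j 0 then s + b else p j).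
  set (p2 := fun j => if Nat.eqb j 1 then s + (b + 1) else p1 j).
  destruct (rounds_cost b n (fun j => if Nat.eqb j 0 then s + b else p2 j) rest S') as [q [Hq0 [Hq1 Hq]]];
    [simpl; auto|simpl; unfold p2; simpl; auto|].
  exists q. split; auto. split; auto. unfold p2, p1 in Hq. rewrite Hq.
  replace (s + b - (s + b)) with 0 by ring. rewrite Rabs_R0. ring.
Qed.

Lemma phases_cost : forall i m p, (1 <= i)%nat ->
  sched_cost p (phases (S m) i) (phsched (S m) i) =
  Rabs (p 0%nat - (s + 2 * INR (S (m + i)))) + Rabs (p 1%nat - (s + (2 * INR (S (m + i)) + 1))) + 4 * INR m.
Proof.
  intros i. induction m as [|m IH]; intros p Hi.
  - change (phases 1 i) with (phase (0 + i) ++ []).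
    change (phsched 1 i) with ((0%nat :: rsched (0 + i)) ++ []).
    destruct (phase_cost (0 + i) p [] [] ltac:(lia)) as [q [_ [_ Hq]]].
    rewrite Hq. simpl. ring.
  - change (phases (S (S m)) i) with (phase (S m + i) ++ phases (S m) i).
    change (phsched (S (S m)) i) with ((0%nat :: rsched (S m + i)) ++ phsched (S m) i).
    destruct (phase_cost (S m + i) p (phases (S m) i) (phsched (S m) i) ltac:(lia)) as [q [Hq0 [Hq1 Hq]]].
    rewrite Hq, IH by auto. rewrite Hq0, Hq1.
    replace (s + 2 * INR (S (S m + i)) - (s + 2 * INR (S (m + i)))) with 2
      by (simpl plus; rewrite (S_INR (S (m+i))); ring).
    replace (s + (2 * INR (S (S m + i)) + 1) - (s + (2 * INR (S (m + i)) + 1))) with 2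
      by (simpl plus; rewrite (S_INR (S (m+i))); ring).
    assert (E2 : Rabs 2 = 2) by (apply Rabs_right; lra). rewrite E2. rewrite (S_INR m). ring.
Qed.

End B.

Theorem proposition5 :
  forall (s rho c : R),
    exists (sigma : list R) (opt : R),
      is_OPT s sigma opt /\
      (exists cost, bal2_run (init_config s) sigma cost) /\
      (forall cost, bal2_run (init_config s) sigma cost -> rho * opt + c < cost).
Proof.
  intros s rho c.
  set (A := Rabs rho). set (C := Rabs c).
  assert (HA : 0 <= A) by apply Rabs_pos. assert (HC : 0 <= C) by apply Rabs_pos.
  destruct (INR_archimed 1 (6 * A + C + 10) ltac:(lra)) as [m Hm].
  rewrite Rmult_1_r in Hm.
  assert (Hm1 : (1 <= m)%nat).
  { destruct m; [simpl in Hm; lra|lia]. }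
  set (sigma := phases s (S m) m).
  destruct (is_OPT_exists s sigma) as [v Hv].
  exists sigma, v. split; [exact Hv|].
  assert (HQ : Q (INR (S m) * (2 * INR m)) (init_config s) sigma).
  { apply phases_ok. split.
    - intro j. left. reflexivity.
    - exists 0%nat. intros j _. reflexivity. }
  destruct HQ as [Hex Hlb]. split; [exact Hex|].
  intros cost Hrun. specialize (Hlb _ Hrun).
  assert (Hv0 : 0 <= v).
  { destruct Hv as [[S0 [_ <-]] _]. apply sched_cost_nonneg. }
  assert (Hvub : v <= 12 * INR m + 5).
  { destruct Hv as [_ Hv2].
    specialize (Hv2 (phsched (S m) m) (len_phases s (S m) m)).
    unfold sigma in Hv2. rewrite phases_cost in Hv2 by exact Hm1.
    replace (s - (s + 2 * INR (S (m + m)))) with (- (2 * INR (S (m + m)))) in Hv2 by ring.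
    replace (s - (s + (2 * INR (S (m + m)) + 1))) with (- (2 * INR (S (m + m)) + 1)) in Hv2 by ring.
    rewrite !Rabs_Ropp in Hv2.
    rewrite S_INR, plus_INR in Hv2.
    pose proof (pos_INR m).
    rewrite (Rabs_right (2 * (INR m + INR m + 1))) in Hv2 by lra.
    rewrite (Rabs_right (2 * (INR m + INR m + 1) + 1)) in Hv2 by lra. lra. }
  rewrite S_INR in Hlb.
  assert (Hr : rho * v <= A * v) by (apply Rmult_le_compat_r; [lra|apply Rle_abs]).
  assert (Hc : c <= C) by apply Rle_abs.
  assert (Hav : A * v <= A * (12 * INR m + 5)) by (apply Rmult_le_compat_l; lra).
  assert (Hkey : A * (12 * INR m + 5) + C < (INR m + 1) * (2 * INR m)).
  { set (x := INR m) in *.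
    assert (x * x > x * (6 * A + C + 10)) by (apply Rmult_lt_compat_l; lra).
    nra. }
  lra.
Qed.
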